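(* Let $n\ge0$ and let $\mathcal V$ be a variety with $n+2$ Gumm terms. If $h\ge0$ and $m=4h+2$, then $\mathcal V$ satisfies $$\alpha(\beta\circ_{m+1}\gamma)\subseteq\alpha(\gamma\circ_{2h+2}\beta)\circ(\alpha\gamma\circ_{mn}\alpha\beta)\quad\text{and}\quad \alpha(\beta\circ_{m+1}\gamma)\subseteq(\alpha\beta\circ_{mn}\alpha\gamma)\circ\alpha(\beta\circ_{2h+2}\gamma).$$ If $h\ge1$ and $m=4h$, then $\mathcal V$ satisfies $$\alpha(\beta\circ_{m+1}\gamma)\subseteq\alpha(\beta\circ_{2h+1}\gamma)\circ(\alpha\gamma\circ_{mn}\alpha\beta).$$
   Context: Here $\alpha,\beta,\gamma$ range over congruences of algebras in $\mathcal V$. $\circ$ is relational composition, juxtaposition is intersection. For relations $X,Y$ and $m\ge1$, $X\circ_m Y$ denotes $X\circ Y\circ X\circ\cdots$ with $m$ factors; $X\circ_0Y$ is the identity relation. A variety has $n+2$ Gumm terms if it has ternary terms $p,j_1,\dots,j_{n+1}$ satisfying: $x=j_i(x,y,x)$ for all $i$; $x=p(x,z,z)$; $p(x,x,z)=j_1(x,x,z)$; $j_i(x,z,z)=j_{i+1}(x,z,z)$ for odd $i\le n$; $j_i(x,x,z)=j_{i+1}(x,x,z)$ for even $i\le n$; $j_{n+1}(x,y,z)=z$. *)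

(* Defs.v *)
From mathcomp Require Import all_boot.
Set Implicit Arguments. Unset Strict Implicit. Unset Printing Implicit Defensive.

Record signature := Signature { op : Type; arity : op -> nat }.

Inductive term (S : signature) (X : Type) : Type :=
  | Var : X -> term S X
  | App : forall f : op S, ('I_(arity f) -> term S X) -> term S X.
Arguments Var {S X}.
Arguments App {S X}.

Record algebra (S : signature) := Algebra {
  carrier :> Type;
  interp : forall f : op S, ('I_(arity f) -> carrier) -> carrier }.

Fixpoint eval (S : signature) (A : algebra S) (X : Type) (v : X -> A)
  (t : term S X) : A :=
  match t with
  | Var x => v x
  | App f args => @interp S A f (fun i => eval v (args i))
  end.

Definition identity (S : signature) := (term S nat * term S nat)%type.
Definition satisfies (S : signature) (A : algebra S) (e : identity S) : Prop :=
  forall v : nat -> A, eval v e.1 = eval v e.2.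

(* A variety, presented (Birkhoff) as the equational class Mod(Sigma) of a set
   of identities Sigma. *)
Definition in_variety (S : signature) (Sigma : identity S -> Prop)
  (A : algebra S) : Prop :=
  forall e, Sigma e -> satisfies A e.

Definition val3 (T : Type) (x y z : T) (i : 'I_3) : T :=
  match nat_of_ord i with 0 => x | 1 => y | _ => z end.
Definition ev3 (S : signature) (A : algebra S) (t : term S 'I_3) (x y z : A) : A :=
  eval (val3 x y z) t.

Definition has_Gumm_terms (S : signature) (Sigma : identity S -> Prop) (n : nat)
  : Prop :=
  exists (p : term S 'I_3) (j : nat -> term S 'I_3),
    forall A : algebra S, in_variety Sigma A ->
    forall x y z : A,
      (forall i, 1 <= i <= n.+1 -> ev3 (j i) x y x = x) /\
      ev3 p x z z = x /\
      ev3 p x x z = ev3 (j 1) x x z /\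
      (forall i, 1 <= i <= n -> odd i -> ev3 (j i) x z z = ev3 (j i.+1) x z z) /\
      (forall i, 1 <= i <= n -> ~~ odd i -> ev3 (j i) x x z = ev3 (j i.+1) x x z) /\
      ev3 (j n.+1) x y z = z.

Definition rel_on (T : Type) := T -> T -> Prop.

Definition is_congruence (S : signature) (A : algebra S) (R : rel_on A) : Prop :=
  (forall x, R x x) /\ (forall x y, R x y -> R y x) /\
  (forall x y z, R x y -> R y z -> R x z) /\
  (forall (f : op S) (a b : 'I_(arity f) -> A),
      (forall i, R (a i) (b i)) -> R (@interp S A f a) (@interp S A f b)).

Definition rcomp (T : Type) (X Y : rel_on T) : rel_on T :=
  fun a c => exists b, X a b /\ Y b c.
Definition rmeet (T : Type) (X Y : rel_on T) : rel_on T :=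
  fun a b => X a b /\ Y a b.
Definition rsub (T : Type) (X Y : rel_on T) : Prop :=
  forall a b, X a b -> Y a b.

(* X o_m Y = X o Y o X o ... (m factors); X o_0 Y = identity relation. *)
Fixpoint rcompn (T : Type) (m : nat) (X Y : rel_on T) : rel_on T :=
  match m with
  | 0 => fun a b => a = b
  | m'.+1 => rcomp X (rcompn m' Y X)
  end.

(* Main.v *)
Require Import Defs.
From mathcomp Require Import all_boot.
From mathcomp Require Import zify.
Set Implicit Arguments. Unset Strict Implicit. Unset Printing Implicit Defensive.

Section Rel.
Variable T : Type.

Lemma path_of L (X Y : rel_on T) a c : rcompn L X Y a c ->
  exists x : nat -> T, x 0 = a /\ x L = c /\
    forall k, k < L -> (if odd k then Y else X) (x k) (x k.+1).
Proof.
elim: L X Y a => [|L IH] X Y a /=.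
  by move=> ->; exists (fun _ => c).
move=> [b [Hab Hr]]; have [y [y0 [yL ys]]] := IH _ _ _ Hr.
exists (fun k => if k is k'.+1 then y k' else a); split=> //; split=> //.
case=> [|k] Hk /=; first by rewrite y0.
by have := ys k Hk; case: (odd k).
Qed.

Lemma snoc k (X Y : rel_on T) a b c : rcompn k X Y a b ->
  (if odd k then Y else X) b c -> rcompn k.+1 X Y a c.
Proof.
elim: k X Y a => [|k IH] X Y a /=.
  by move=> -> H; exists c.
move=> [e [Hae Hr]] H; exists e; split=> //; apply: (IH _ _ _ Hr).
by move: H; case: (odd k).
Qed.

Lemma concat k l (X Y : rel_on T) a b c : rcompn k X Y a b ->
  rcompn l (if odd k then Y else X) (if odd k then X else Y) b c ->
  rcompn (k + l) X Y a c.
Proof.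
elim: k X Y a => [|k IH] X Y a /=.
  by move=> ->.
move=> [e [Hae Hr]] H; exists e; split=> //; apply: (IH _ _ _ Hr).
by move: H; case: (odd k).
Qed.

Lemma concat_even k l (X Y : rel_on T) a b c : ~~ odd k -> rcompn k X Y a b ->
  rcompn l X Y b c -> rcompn (k + l) X Y a c.
Proof. by move=> Hk H1 H2; apply: (concat H1); move: Hk H2; case: (odd k). Qed.

Lemma rev k (X Y : rel_on T) a b :
  (forall u v, X u v -> X v u) -> (forall u v, Y u v -> Y v u) ->
  rcompn k X Y a b ->
  rcompn k (if odd k then X else Y) (if odd k then Y else X) b a.
Proof.
move=> sX sY; elim: k X Y sX sY a => [|k IH] X Y sX sY a /=.
  by move=> ->.
move=> [e [Hae Hr]]; have H := IH _ _ sY sX _ Hr.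
case Ok: (odd k) H => /= H; apply: (snoc H); rewrite Ok; exact: sX.
Qed.

End Rel.

Lemma eval_compat (S : signature) (A : algebra S) (R : rel_on A) (X : Type)
  (v w : X -> A) (t : term S X) : is_congruence R ->
  (forall x, R (v x) (w x)) -> R (eval v t) (eval w t).
Proof.
move=> [_ [_ [_ C]]] H; elim: t => [x|f args IH] /=; first exact: H.
by apply: C => i; apply: IH.
Qed.

Lemma ev3_compat (S : signature) (A : algebra S) (R : rel_on A) t
  (x y z x' y' z' : A) : is_congruence R -> R x x' -> R y y' -> R z z' ->
  R (ev3 t x y z) (ev3 t x' y' z').
Proof.
move=> C Hx Hy Hz; apply: eval_compat => // -[[|[|k]] Hk] //=.
Qed.

Lemma core (S : signature) (n : nat) (p : term S 'I_3) (j : nat -> term S 'I_3)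
  (A : algebra S)
  (HJ : forall x y z : A,
      (forall i, 1 <= i <= n.+1 -> ev3 (j i) x y x = x) /\
      ev3 p x z z = x /\
      ev3 p x x z = ev3 (j 1) x x z /\
      (forall i, 1 <= i <= n -> odd i -> ev3 (j i) x z z = ev3 (j i.+1) x z z) /\
      (forall i, 1 <= i <= n -> ~~ odd i -> ev3 (j i) x x z = ev3 (j i.+1) x x z) /\
      ev3 (j n.+1) x y z = z)
  (alpha beta gamma : rel_on A) :
  is_congruence alpha -> is_congruence beta -> is_congruence gamma ->
  forall t, 0 < t -> forall a c, alpha a c -> rcompn (2 * t + 1) beta gamma a c ->
  exists d, (alpha a d /\
     rcompn (t + 1) (if odd t then gamma else beta) (if odd t then beta else gamma) a d)
   /\ rcompn (2 * t * n) (rmeet alpha gamma) (rmeet alpha beta) d c.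
Proof.
move=> Ca Cb Cg t t0 a c Hac Hp.
have [x [x0 [xL xs]]] := path_of Hp.
set Q := fun k => if odd k then gamma else beta.
have CQ : forall k, is_congruence (Q k) by move=> k; rewrite /Q; case: (odd k).
have xs' : forall k, k < 2 * t + 1 -> Q k (x k) (x k.+1) by [].
have refl : forall (R : rel_on A), is_congruence R -> forall u, R u u
  by move=> R [H _].
have sym : forall (R : rel_on A), is_congruence R -> forall u v, R u v -> R v u
  by move=> R [_ [H _]].
have trans : forall (R : rel_on A), is_congruence R -> forall u v w, R u v -> R v w -> R u w
  by move=> R [_ [_ [H _]]].
have Ja : forall i u, 1 <= i <= n.+1 -> alpha (ev3 (j i) a u c) a.
  move=> i u Hi; have [H1 _] := HJ a u a.
  rewrite -{2}(H1 i Hi); apply: ev3_compat => //; [exact: refl | exact: refl | exact: sym].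
have Jstep : forall (R : rel_on A), is_congruence R -> forall i i' u u',
    1 <= i <= n.+1 -> 1 <= i' <= n.+1 -> R (ev3 (j i) a u c) (ev3 (j i') a u' c) ->
    rmeet alpha R (ev3 (j i) a u c) (ev3 (j i') a u' c).
  move=> R CR i i' u u' Hi Hi' H; split=> //.
  apply: (trans _ Ca _ a); [exact: Ja | apply: sym => //; exact: Ja].
have JR : forall (R : rel_on A), is_congruence R -> forall i u u',
    R u u' -> R (ev3 (j i) a u c) (ev3 (j i) a u' c).
  by move=> R CR i u u' H; apply: ev3_compat => //; exact: refl.
have [m' Hm' Hodd] : exists2 m', 2 * t = m'.+1 & odd m'.
  exists (2 * t).-1; first by lia.
  have : odd (2 * t) = false by rewrite oddM.
  have P : 0 < 2 * t by lia.
  by rewrite -{1}(prednK P) /=; case: (odd _).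
have Q0 : Q 0 = beta by [].
have Xend : beta (x (2 * t)) c.
  have := xs' (2 * t) ltac:(lia); rewrite /Q oddM /= -xL addn1; exact.
have Xst : beta a (x 1) by rewrite -x0; exact: (xs' 0 ltac:(lia)).
have Q2t : Q (2 * t) = beta by rewrite /Q oddM.
set F := fun s => ev3 p a (x (t - s)) (x (t.+1 + s)).
have fold : forall s, s < t -> rcompn s.+1 (Q t) (Q t.+1) a (F s).
  elim=> [|s IH] Hs.
    exists (F 0); split=> //.
    have [_ [H2 _]] := HJ a a (x t.+1).
    rewrite -{1}H2 /F subn0 addn0; apply: ev3_compat => //; [exact: refl| |exact: refl].
    apply: sym => //; apply: xs'; lia.
  apply: (snoc (IH (ltnW Hs))).
  have -> : (if odd s.+1 then Q t.+1 else Q t) = Q (t.+1 + s).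
    by rewrite /Q oddD /=; case: (odd t); case: (odd s).
  rewrite /F; apply: ev3_compat => //; first exact: refl.
    apply: sym => //.
    have E : (t - s.+1).+1 = t - s by lia.
    have := xs' (t - s.+1) ltac:(lia); rewrite E.
    suff -> : Q (t - s.+1) = Q (t.+1 + s) by [].
    rewrite /Q oddB; last by lia.
    by rewrite oddD /=; case: (odd t); case: (odd s).
  rewrite addnS; apply: xs'; lia.
set B := fun i => ev3 (j i) a (x (if odd i then 1 else 2 * t)) c.
exists (B 1); split; first split.
- by apply: sym => //; apply: Ja.
- rewrite addn1; have Ht : t = t.-1.+1 by lia.
  have H := fold t.-1 ltac:(lia); rewrite -Ht in H.
  have EQ : Q t.+1 = if odd t then beta else gamma by rewrite /Q /=; case: (odd t).
  rewrite EQ {1}/Q in H.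
  apply: (snoc H).
  have -> : (if odd t then (if odd t then beta else gamma) else (if odd t then gamma else beta)) = beta by case: (odd t).
  have [_ [_ [H3 _]]] := HJ a a c.
  apply: (trans _ Cb _ (ev3 (j 1) a a c)); last first.
    apply: JR => //; rewrite -x0; exact: (xs' 0 ltac:(lia)).
  rewrite -H3 /F; apply: ev3_compat => //; first exact: refl.
    have -> : t - t.-1 = 1 by lia.
    apply: sym => //; rewrite -x0; exact: (xs' 0 ltac:(lia)).
  have -> : t.+1 + t.-1 = 2 * t by lia.
  rewrite -xL addn1; rewrite -Q2t; apply: xs'; lia.
-
  have block : forall i, 1 <= i <= n ->
      rcompn (2 * t) (rmeet alpha gamma) (rmeet alpha beta) (B i) (B i.+1).
    move=> i Hi; rewrite Hm'.
    have [_ [_ [_ [Hjo [Hje _]]]]] := HJ a a c.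
    case Oi: (odd i).
    + have inner : forall r, r < 2 * t ->
          rcompn r (rmeet alpha gamma) (rmeet alpha beta) (B i) (ev3 (j i) a (x r.+1) c).
        elim=> [|r IH] Hr; first by rewrite /B Oi.
        apply: (snoc (IH (ltnW Hr))).
        have E : (if odd r then rmeet alpha beta else rmeet alpha gamma)
                 = rmeet alpha (Q r.+1) by rewrite /Q /=; case: (odd r).
        rewrite E; apply: Jstep => //; first by lia.
          by lia.
        by apply: JR => //; apply: xs'; lia.
      have H := inner m' ltac:(lia).
      apply: (snoc H); rewrite Hodd.
      rewrite -Hm'; apply: Jstep => //; try lia.
      apply: (trans _ Cb _ (ev3 (j i) a c c)).
        by apply: JR.
      rewrite (Hjo i Hi Oi) /B /= Oi /=.
      by apply: JR => //; apply: sym.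
    + have inner : forall r, r < 2 * t ->
          rcompn r (rmeet alpha gamma) (rmeet alpha beta) (B i)
            (ev3 (j i) a (x (2 * t - r)) c).
        elim=> [|r IH] Hr; first by rewrite /B Oi subn0.
        apply: (snoc (IH (ltnW Hr))).
        have E : (if odd r then rmeet alpha beta else rmeet alpha gamma)
                 = rmeet alpha (Q (2 * t - r.+1)).
          by rewrite /Q oddB ?oddM /=; [case: (odd r) | lia].
        rewrite E; apply: Jstep => //; try lia.
        apply: JR => //; apply: sym => //.
        have E2 : 2 * t - r = (2 * t - r.+1).+1 by lia.
        rewrite E2; apply: xs'; lia.
      have H := inner m' ltac:(lia).
      apply: (snoc H); rewrite Hodd.
      have -> : 2 * t - m' = 1 by lia.
      apply: Jstep => //; try lia.
      apply: (trans _ Cb _ (ev3 (j i) a a c)).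
        by apply: JR => //; apply: sym.
      rewrite (Hje i Hi (negbT Oi)) /B /= Oi /=.
      by apply: JR.
  have chain : forall i, i <= n ->
      rcompn (2 * t * i) (rmeet alpha gamma) (rmeet alpha beta) (B 1) (B i.+1).
    elim=> [|i IH] Hi; first by rewrite muln0.
    rewrite mulnS addnC; apply: (concat_even _ (IH (ltnW Hi))).
      by rewrite !oddM.
    apply: block; lia.
  have := chain n (leqnn n).
  suff -> : B n.+1 = c by [].
  by have [_ [_ [_ [_ [_ H6]]]]] := HJ a (x (if odd n.+1 then 1 else 2 * t)) c.
Qed.

Theorem theorem4p5 (S : signature) (Sigma : identity S -> Prop) (n : nat)
  (HG : has_Gumm_terms Sigma n) :
  (forall h m : nat, m = 4 * h + 2 ->
     forall (A : algebra S), in_variety Sigma A ->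
     forall alpha beta gamma : rel_on A,
       is_congruence alpha -> is_congruence beta -> is_congruence gamma ->
       rsub (rmeet alpha (rcompn (m + 1) beta gamma))
            (rcomp (rmeet alpha (rcompn (2 * h + 2) gamma beta))
                   (rcompn (m * n) (rmeet alpha gamma) (rmeet alpha beta))) /\
       rsub (rmeet alpha (rcompn (m + 1) beta gamma))
            (rcomp (rcompn (m * n) (rmeet alpha beta) (rmeet alpha gamma))
                   (rmeet alpha (rcompn (2 * h + 2) beta gamma)))) /\
  (forall h m : nat, 1 <= h -> m = 4 * h ->
     forall (A : algebra S), in_variety Sigma A ->
     forall alpha beta gamma : rel_on A,
       is_congruence alpha -> is_congruence beta -> is_congruence gamma ->
       rsub (rmeet alpha (rcompn (m + 1) beta gamma))
            (rcomp (rmeet alpha (rcompn (2 * h + 1) beta gamma))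
                   (rcompn (m * n) (rmeet alpha gamma) (rmeet alpha beta)))).
Proof.
have [p [j HJ]] := HG.
split.
- move=> h m -> A inV alpha beta gamma Ca Cb Cg.
  have C := core (HJ A inV) Ca Cb Cg.
  have E1 : 4 * h + 2 + 1 = 2 * (2 * h + 1) + 1 by lia.
  have E2 : 4 * h + 2 = 2 * (2 * h + 1) by lia.
  have E3 : 2 * h + 2 = (2 * h + 1) + 1 by lia.
  have Ot : odd (2 * h + 1) by rewrite addn1 /= oddM.
  have T0 : 0 < 2 * h + 1 by lia.
  split.
  + move=> a c [Hac Hp]; rewrite E1 in Hp.
    have [d [[Had Hr] Hc]] := C _ T0 _ _ Hac Hp.
    exists d; rewrite E3 E2; split=> //; split=> //.
    by move: Hr; rewrite Ot.
  + move=> a c [Hac Hp]; rewrite E1 in Hp.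
    have sb : forall u v, beta u v -> beta v u by case: Cb => _ [].
    have sg : forall u v, gamma u v -> gamma v u by case: Cg => _ [].
    have sa : forall u v, alpha u v -> alpha v u by case: Ca => _ [].
    have Hp' := rev sb sg Hp.
    have Oodd : odd (2 * (2 * h + 1) + 1) by rewrite addn1 /= oddM.
    rewrite Oodd in Hp'.
    have [d [[Hcd Hr] Hc]] := C _ T0 _ _ (sa _ _ Hac) Hp'.
    rewrite Ot in Hr.
    exists d; rewrite E3 E2; split.
      have H := rev (fun u v (H : rmeet alpha gamma u v) => conj (sa _ _ H.1) (sg _ _ H.2))
                    (fun u v (H : rmeet alpha beta u v) => conj (sa _ _ H.1) (sb _ _ H.2)) Hc.
      by move: H; rewrite !oddM.
    split; first exact: sa.
    have H := rev sg sb Hr.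
    by move: H; rewrite addn1 /= Ot.
- move=> h m h1 -> A inV alpha beta gamma Ca Cb Cg.
  have C := core (HJ A inV) Ca Cb Cg.
  have E1 : 4 * h + 1 = 2 * (2 * h) + 1 by lia.
  have E2 : 4 * h = 2 * (2 * h) by lia.
  have Ot : odd (2 * h) = false by rewrite oddM.
  have T0 : 0 < 2 * h by lia.
  move=> a c [Hac Hp]; rewrite E1 in Hp.
  have [d [[Had Hr] Hc]] := C _ T0 _ _ Hac Hp.
  exists d; rewrite E2; split=> //; split=> //.
  by move: Hr; rewrite Ot.
Qed.
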